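(* For every $n\in\mathbb{N}_{\geq1}$, the GFB tree $T_n^{gfb}$ with $n$ leaves has minimal Colless index, i.e. $\mathcal{C}(T_n^{gfb})=c_n$, where $c_n$ is the minimum of $\mathcal{C}(T)$ over all rooted binary trees $T$ with $n$ leaves.
   Context: A rooted binary tree with $n\geq 2$ leaves is a rooted tree whose root has degree 2 and all other internal nodes have degree 3; for $n=1$ it is a single node. Trees are considered up to isomorphism. For an internal node $v$ with children $v_1,v_2$, let $\kappa(v_i)$ be the number of leaves descending from $v_i$ ($1$ if $v_i$ is a leaf). The Colless index is $\mathcal{C}(T)=\sum_v|\kappa(v_1)-\kappa(v_2)|$ over internal nodes $v$. The size of a tree is its number of leaves. The greedy from the bottom (GFB) tree $T_n^{gfb}$ is the output of the following procedure: start with a multiset of $n$ single-node trees; while the multiset contains more than one tree, remove a tree $u$ of minimal size, then remove a tree $v$ of minimal size among the remaining ones, and insert the tree consisting of a new root whose two children are the roots of $u$ and $v$; output the single remaining tree. (The output is unique up to isomorphism.) *)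

(* Defs.v *)
From mathcomp Require Import all_boot.
From Stdlib Require Import Permutation Relations.Relation_Operators.

Set Implicit Arguments.
Unset Strict Implicit.
Unset Printing Implicit Defensive.

(* Rooted binary trees (unlabelled; isomorphism classes are handled by the fact
   that every notion below is invariant under swapping children). *)
Inductive btree : Type :=
| Leaf : btree
| Node : btree -> btree -> btree.

Fixpoint leaves (t : btree) : nat :=
  match t with
  | Leaf => 1
  | Node l r => leaves l + leaves r
  end.

Definition natdist (a b : nat) : nat := (a - b) + (b - a).

Fixpoint colless (t : btree) : nat :=
  match t with
  | Leaf => 0
  | Node l r => natdist (leaves l) (leaves r) + colless l + colless r
  end.

(* One step of the greedy-from-the-bottom procedure on a multiset of trees
   (represented as a list up to permutation): remove a tree u of minimal size,
   then a tree v of minimal size among the remaining ones, and insert the tree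
   with a new root whose children are u and v. Any tie-breaking is allowed. *)
Definition gfb_step (s s' : seq btree) : Prop :=
  exists u v rest,
    Permutation s (u :: v :: rest) /\
    all (fun t => leaves u <= leaves t) (v :: rest) /\
    all (fun t => leaves v <= leaves t) rest /\
    s' = Node u v :: rest.

Definition is_gfb_tree (n : nat) (T : btree) : Prop :=
  clos_refl_trans (seq btree) gfb_step (nseq n Leaf) [:: T].

Definition has_min_colless (n : nat) (T : btree) : Prop :=
  leaves T = n /\ forall T' : btree, leaves T' = n -> colless T <= colless T'.

(* Main.v *)
Require Import Defs.
From mathcomp Require Import all_boot zify.
From Stdlib Require Import Permutation Relations.Relation_Operators.

Fixpoint fc (k n : nat) : nat :=
  if k is k'.+1 then
    (if n <= 1 then 0 else fc k' (n - n %/ 2) + fc k' (n %/ 2) + n %% 2)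
  else 0.
Definition f n := fc n n.

Lemma fc_indep k1 : forall k2 n, n <= k1 -> n <= k2 -> fc k1 n = fc k2 n.
Proof.
elim: k1 => [|k1 IH] [|k2] n h1 h2 //=.
- by have -> : n = 0 by lia.
- by have -> : n = 0 by lia.
- case: ifP => // hn.
  rewrite (IH k2 (n - n %/ 2)); try lia.
  by rewrite (IH k2 (n %/ 2)); lia.
Qed.

Lemma fE n : 2 <= n -> f n = f (n - n %/ 2) + f (n %/ 2) + n %% 2.
Proof.
move=> hn; rewrite /f; case: n hn => [|n] hn //=.
rewrite ifN; last lia.
rewrite (@fc_indep n (n.+1 - n.+1 %/ 2) (n.+1 - n.+1 %/ 2)); try lia.
by rewrite (@fc_indep n (n.+1 %/ 2) (n.+1 %/ 2)); lia.
Qed.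

Lemma f_even m : 1 <= m -> f (2*m) = f m + f m.
Proof.
move=> h; rewrite fE; last lia.
have -> : (2*m) %/ 2 = m by lia.
have -> : 2*m - m = m by lia.
have -> : (2*m) %% 2 = 0 by lia.
by rewrite addn0.
Qed.

Lemma f_odd m : 1 <= m -> f (2*m+1) = f (m+1) + f m + 1.
Proof.
move=> h; rewrite fE; last lia.
have -> : (2*m+1) %/ 2 = m by lia.
have -> : 2*m+1 - m = m+1 by lia.
by have -> : (2*m+1) %% 2 = 1 by lia.
Qed.

Lemma f0 : f 0 = 0. Proof. by []. Qed.
Lemma f1 : f 1 = 0. Proof. by []. Qed.
Lemma f2 : f 2 = 0. Proof. by []. Qed.

Lemma parity a : (exists a1, a = 2*a1) \/ (exists a1, a = 2*a1+1).
Proof.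
have := modn2 a; case: (odd a) => /= h; [right|left]; exists (a %/ 2); lia.
Qed.

Lemma G n : forall a b, a + b <= n -> f (a + b) <= f a + f b + natdist a b.
Proof.
rewrite /natdist.
elim: n => [|n IH] a b hab.
  by have [-> ->] : a = 0 /\ b = 0 by lia.
case: (leqP (a + b) n) => hn; first exact: IH.
case: (posnP a) => [->|ha]; first by rewrite add0n; lia.
case: (posnP b) => [->|hb]; first by rewrite addn0; lia.
case: (ltnP 1 a) => ha2; case: (ltnP 1 b) => hb2.
- case: (parity a) => [[a1 Ea]|[a1 Ea]]; subst a; case: (parity b) => [[b1 Eb]|[b1 Eb]]; subst b.
  + have -> : 2*a1 + 2*b1 = 2*(a1+b1) by lia.
    rewrite !f_even; try lia.
    have := IH a1 b1; lia.
  + have -> : 2*a1 + (2*b1+1) = 2*(a1+b1)+1 by lia.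
    rewrite !f_even ?f_odd; try lia.
    have := IH a1 b1; have := IH a1 (b1+1).
    have -> : a1 + (b1 + 1) = a1 + b1 + 1 by lia. lia.
  + have -> : 2*a1 + 1 + 2*b1 = 2*(a1+b1)+1 by lia.
    rewrite !f_even ?f_odd; try lia.
    have := IH a1 b1; have := IH (a1+1) b1.
    have -> : a1 + 1 + b1 = a1 + b1 + 1 by lia. lia.
  + have -> : 2*a1 + 1 + (2*b1+1) = 2*(a1+b1+1) by lia.
    rewrite !f_even ?f_odd; try lia.
    have := IH a1 (b1+1); have := IH (a1+1) b1.
    have -> : a1 + 1 + b1 = a1 + b1 + 1 by lia.
    have -> : a1 + (b1 + 1) = a1 + b1 + 1 by lia. lia.
- have -> : b = 1 by lia.
  case: (parity a) => [[a1 Ea]|[a1 Ea]]; subst a.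
  + rewrite f_even ?f_odd ?f1; try lia.
    have := IH 1 a1; rewrite f1 (addnC 1 a1). lia.
  + have -> : 2*a1 + 1 + 1 = 2*(a1+1) by lia.
    rewrite f_even ?f_odd ?f1; try lia.
    have := IH 1 a1; rewrite f1 (addnC 1 a1). lia.
- have -> : a = 1 by lia.
  case: (parity b) => [[b1 Eb]|[b1 Eb]]; subst b.
  + rewrite (addnC 1) f_odd ?f_even ?f1; try lia.
    have := IH 1 b1; rewrite f1 (addnC 1 b1). lia.
  + have -> : 1 + (2*b1 + 1) = 2*(b1+1) by lia.
    rewrite f_even ?f_odd ?f1; try lia.
    have := IH 1 b1; rewrite f1 (addnC 1 b1). lia.
- have [-> ->] : a = 1 /\ b = 1 by lia.
  by rewrite f2.
Qed.

Lemma fpow j : f (2^j) = 0.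
Proof.
elim: j => [|j IH]; first by [].
by rewrite expnS f_even ?IH ?expn_gt0.
Qed.

Lemma L k : forall m, 2^k <= 2*m <= 4 * 2^k -> f (m + 2^k) = f m + natdist m (2^k).
Proof.
rewrite /natdist.
elim: k => [|k IH] m hm.
  rewrite expn0 in hm *.
  have : m = 1 \/ m = 2 by lia.
  by case=> ->.
case: k IH hm => [|k] IH hm.
  rewrite expn1 in hm *.
  have : m = 1 \/ m = 2 \/ m = 3 \/ m = 4 by lia.
  by case=> [->|[->|[->|->]]].
rewrite expnS in hm *.
have hp : 2^k.+1 = 2 * 2^k by rewrite expnS.
have hp1 : 1 <= 2^k by rewrite expn_gt0.
move: IH hm; rewrite hp => IH hm.
set r := 2^k in IH hm hp1 *.
case: (parity m) => [[m1 Em]|[m1 Em]]; subst m.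
- have -> : 2*m1 + 2*(2*r) = 2*(m1 + 2*r) by lia.
  rewrite !f_even; try lia.
  rewrite IH; lia.
- have -> : 2*m1 + 1 + 2*(2*r) = 2*(m1 + 2*r) + 1 by lia.
  rewrite !f_odd; try lia.
  have -> : m1 + 2*r + 1 = (m1 + 1) + 2*r by lia.
  rewrite !IH; lia.
Qed.

Lemma Perm_all {T : Type} (P : pred T) {s t} : Permutation s t -> all P s = all P t.
Proof.
elim=> //= [x s1 t1 _ IH|x y l|s1 t1 u1 _ IH1 _ IH2]; first by rewrite IH.
- by rewrite andbCA.
- by rewrite IH1.
Qed.

Lemma Perm_count {T : Type} (P : pred T) {s t} : Permutation s t -> count P s = count P t.
Proof.
elim=> //= [x s1 t1 _ IH|x y l|s1 t1 u1 _ IH1 _ IH2]; first by rewrite IH.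
- by rewrite addnCA.
- by rewrite IH1.
Qed.

Lemma Perm_sum {s t} : Permutation s t -> sumn (map leaves s) = sumn (map leaves t).
Proof.
elim=> //= [x s1 t1 _ IH|x y l|s1 t1 u1 _ IH1 _ IH2]; first by rewrite IH.
- by rewrite addnCA.
- by rewrite IH1.
Qed.

Lemma all3 {T : Type} {P Q R S : pred T} {s} :
  all P s -> all Q s -> all R s -> (forall x, P x -> Q x -> R x -> S x) -> all S s.
Proof.
move=> h1 h2 h3 H; elim: s h1 h2 h3 => //= x s IH /andP[a1 b1] /andP[a2 b2] /andP[a3 b3].
by rewrite H //= IH.
Qed.

Lemma count0_all {T : Type} {P : pred T} {s} : count P s = 0 -> all (fun x => ~~ P x) s.
Proof. by elim: s => //= x s IH; case: (P x) => //= /IH. Qed.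

Lemma all_count0 {T : Type} {P Q : pred T} {s} :
  all P s -> (forall x, P x -> ~~ Q x) -> count Q s = 0.
Proof.
move=> h H; elim: s h => //= x s IH /andP[a b].
by rewrite IH // (negbTE (H x a)).
Qed.

Definition special p t := (p < leaves t) && (leaves t < 2 * p).
Definition okt p t := [|| leaves t == p, leaves t == 2 * p | special p t].
Definition goodc t := colless t <= f (leaves t).

Definition Inv (s : seq btree) :=
  exists j, all (okt (2^j)) s /\ count (special (2^j)) s <= 1 /\ all goodc s.

Lemma Inv_perm s t : Permutation s t -> Inv s -> Inv t.
Proof.
move=> P [j [h1 [h2 h3]]]; exists j.
by rewrite -(Perm_all _ P) -(Perm_count _ P) -(Perm_all _ P).
Qed.


Lemma Inv_step s s' : gfb_step s s' -> Inv s -> Inv s'.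
Proof.
move=> [u [v [rest [P [Hu [Hv ->]]]]]] I.
have [j [h1 [h2 h3]]] := Inv_perm _ _ P I.
move: h1 h2 h3 Hu => /= /and3P[ou ov orest] h2 /and3P[gu gv grest] /andP[uv urest].
have Lp := L j.
have L2p := L j.+1; rewrite expnS in L2p.
have fp := fpow j.
have f2p := fpow j.+1; rewrite expnS in f2p.
have hp1 : 1 <= 2^j by rewrite expn_gt0.
move: ou ov orest h2 gu gv Lp L2p fp f2p hp1 grest Hv urest uv.
rewrite /okt /special /goodc /=.
set p := 2^j.
move=> ou ov orest h2 gu gv Lp L2p fp f2p hp1 grest Hv urest uv.
case: (boolP ((leaves u == p) && (leaves v == p))) => [/andP[/eqP Ea /eqP Eb]|nA1].
  exists j; rewrite /okt /special /goodc -/p /= grest andbT.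
  have E : f (p + p) = f p + natdist p p by apply: Lp; lia.
  rewrite /natdist Ea Eb; rewrite /natdist Ea Eb in E h2 gu gv.
  split; [apply/andP; split; [lia|exact orest]|split; lia].
have Hr : all (fun t => leaves t == 2 * p) rest.
  case: (posnP (count (fun t => [&& p < leaves t & leaves t < 2 * p]) rest)) => hc.
    apply: (all3 orest Hv (count0_all hc)) => t /= o1 o2 o3; lia.
  apply: (all3 orest Hv orest) => t /= o1 o2 _; lia.
exists j.+1; rewrite expnS -/p /=.
have -> : all (fun t => [|| leaves t == 2 * p, leaves t == 2 * (2 * p)
      | (2 * p < leaves t) && (leaves t < 2 * (2 * p))]) rest.
  by apply: sub_all Hr => t /= /eqP ->; rewrite eqxx.
have -> : count (fun t => (2 * p < leaves t) && (leaves t < 2 * (2 * p))) rest = 0.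
  by apply: (all_count0 Hr) => t /= /eqP ->; lia.
rewrite grest !andbT addn0 /=.
have [Ea|Ea] : leaves u = p \/ leaves v = 2 * p by lia.
- have E : f (leaves u + leaves v) = f (leaves v) + natdist (leaves v) p.
    by rewrite Ea addnC; apply: Lp; lia.
  move: E gu gv; rewrite /natdist Ea fp => E gu gv.
  rewrite /okt /special /goodc /= Ea /natdist; split; [|split]; lia.
- have E : f (leaves u + leaves v) = f (leaves u) + natdist (leaves u) (2 * p).
    by rewrite Ea; apply: L2p; lia.
  move: E gu gv; rewrite /natdist Ea f2p => E gu gv.
  rewrite /okt /special /goodc /= Ea /natdist; split; [|split]; lia.
Qed.

Lemma Perm_size {T : Type} {s t : seq T} : Permutation s t -> size s = size t.
Proof. elim=> //= [x s1 t1 _ -> | s1 t1 u1 _ -> _ ->] //. Qed.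

Lemma rt_inv (P : seq btree -> Prop) x y :
  (forall a b, gfb_step a b -> P a -> P b) ->
  clos_refl_trans (seq btree) gfb_step x y -> P x -> P y.
Proof. move=> H; elim=> [a b st|a|a b c _ IH1 _ IH2]; eauto. Qed.

Lemma sum_step n a b : gfb_step a b -> sumn (map leaves a) = n -> sumn (map leaves b) = n.
Proof.
move=> [u [v [rest [P [_ [_ ->]]]]]]; rewrite (Perm_sum P) /= => <-.
by rewrite addnA.
Qed.

Lemma Inv0 n : Inv (nseq n Leaf).
Proof.
exists 0; rewrite expn0; split; [|split].
- by elim: n.
- by elim: n.
- by elim: n.
Qed.

Lemma sum0 n : sumn (map leaves (nseq n Leaf)) = n.
Proof. by elim: n => //= n ->. Qed.

Lemma leaves_pos t : 0 < leaves t.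
Proof. elim: t => //= l hl r hr; lia. Qed.

Lemma LB t : f (leaves t) <= colless t.
Proof.
elim: t => //= l hl r hr.
have := @G _ (leaves l) (leaves r) (leqnn _). lia.
Qed.

Lemma ex_min (s : seq btree) : 0 < size s ->
  exists u rest, Permutation s (u :: rest) /\ all (fun t => leaves u <= leaves t) rest.
Proof.
elim: s => // x s IH _.
case: s IH => [|y s] IH.
  by exists x, [::]; split.
have [u [rest [P A]]] := IH isT.
case: (leqP (leaves x) (leaves u)) => h.
  exists x, (y :: s); split => //.
  rewrite (Perm_all _ P) /=.
  apply/andP; split => //.
  by apply: sub_all A => t /= ht; apply: leq_trans h ht.
exists u, (x :: rest); split.
  apply: Permutation_trans (perm_swap _ _ _).
  by apply: perm_skip.
by rewrite /= A andbT ltnW.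
Qed.

Lemma ex_run k : forall s : seq btree, size s = k.+1 ->
  exists T, clos_refl_trans (seq btree) gfb_step s [:: T].
Proof.
elim: k => [|k IH] s hs.
  case: s hs => [|x [|y s]] //= _.
  by exists x; apply: rt_refl.
have hs0 : 0 < size s by rewrite hs.
have [u [r1 [P1 A1]]] := ex_min s hs0.
have hr1 : size r1 = k.+1.
  by have := Perm_size P1; rewrite /= hs => -[].
have hr0 : 0 < size r1 by rewrite hr1.
have [v [rest [P2 A2]]] := ex_min r1 hr0.
have st : gfb_step s (Node u v :: rest).
  exists u, v, rest; split; [|split; [|split]] => //.
  - apply: Permutation_trans P1 _; exact: perm_skip.
  - by rewrite -(Perm_all _ P2).
have hsz : size (Node u v :: rest) = k.+1.
  by have := Perm_size P2; rewrite /= hr1 => -[] <-.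
have [T HT] := IH (Node u v :: rest) hsz.
exists T; apply: rt_trans HT; exact: rt_step.
Qed.

Theorem theorem5 (n : nat) (hn : 1 <= n) :
  (exists T : btree, is_gfb_tree n T) /\
  (forall T : btree, is_gfb_tree n T -> has_min_colless n T).
Proof.
split.
  apply: (@ex_run n.-1); rewrite size_nseq; lia.
move=> T H.
have [j [_ [_ /= /andP [gT _]]]] := rt_inv _ _ _ Inv_step H (Inv0 n).
have hs := rt_inv (fun s => sumn (map leaves s) = n) _ _ (fun a b st => sum_step n a b st) H (sum0 n).
rewrite /= addn0 in hs.
split => // T' hT'.
have := LB T'; rewrite hT' -hs.
move: gT; rewrite /goodc; lia.
Qed.
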